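(* Fix $w>0$. For $\rho\in(-1,1)$, let $(x,y)$ be bivariate normal with mean $(0,0)$, unit variances and correlation $\rho$, and code each real $t$ by $c(t)=0$ if $t\le -w$, $1$ if $-w<t\le 0$, $2$ if $0<t\le w$, $3$ if $t>w$. Let $I_{2,\rho,w}$ be the Fisher information about $\rho$ contained in $k$ i.i.d. observations of the pair of codes $(c(x),c(y))$ (a multinomial model with the 16 cell probabilities $P_{i,j}(\rho,w)=\Pr(c(x)=i,c(y)=j)$), i.e. $I_{2,\rho,w}=k\sum_{i,j}\frac{(\partial_\rho P_{i,j}(\rho,w))^2}{P_{i,j}(\rho,w)}$. Let $$I_{1,\rho}=2k\frac{1}{4\pi^2(1-\rho^2)}\left[\frac{1}{\frac14+\frac{\arcsin\rho}{2\pi}}+\frac{1}{\frac14-\frac{\arcsin\rho}{2\pi}}\right]$$ be the Fisher information about $\rho$ in $k$ i.i.d. observations of the signs $(\mathrm{sgn}(x),\mathrm{sgn}(y))$, and let $R_{\rho,w}=I_{2,\rho,w}/I_{1,\rho}$. Then at $\rho=0$ (equivalently, in the limit $\rho\to0$) $$R_{0,w}=[g(w)]^2,\qquad g(w)=\frac12\left[\frac{\left(1-e^{-w^2/2}\right)^2}{\Phi(w)-\frac12}+\frac{e^{-w^2}}{1-\Phi(w)}\right],$$ where $\Phi$ is the standard normal cumulative distribution function.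
   Context: $\Phi(x)=\int_{-\infty}^x\frac{1}{\sqrt{2\pi}}e^{-t^2/2}\,dt$. The ratio $R_{\rho,w}$ measures the variance reduction of the maximum likelihood estimator of $\rho$ from 2-bit coded random projections relative to the 1-bit (sign) estimator. *)

(* Defs.v *)
From Stdlib Require Import Reals.
From Coquelicot Require Import Coquelicot.
Open Scope R_scope.

Definition phi (t : R) : R := / sqrt (2 * PI) * exp (- t ^ 2 / 2).
Definition Phi (x : R) : R := RInt_gen phi (Rbar_locally m_infty) (Rbar_locally (Finite x)).

Definition phi2 (rho x y : R) : R :=
  / (2 * PI * sqrt (1 - rho ^ 2)) *
  exp (- (x ^ 2 - 2 * rho * x * y + y ^ 2) / (2 * (1 - rho ^ 2))).

(* The 2-bit code c(t): cell i is the interval (lo i, hi i]. *)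
Definition code_lo (w : R) (i : nat) : Rbar :=
  match i with 0%nat => m_infty | 1%nat => Finite (- w) | 2%nat => Finite 0 | _ => Finite w end.
Definition code_hi (w : R) (i : nat) : Rbar :=
  match i with 0%nat => Finite (- w) | 1%nat => Finite 0 | 2%nat => Finite w | _ => p_infty end.

Definition Pcell (w rho : R) (i j : nat) : R :=
  RInt_gen (fun x => RInt_gen (fun y => phi2 rho x y)
                       (Rbar_locally (code_lo w j)) (Rbar_locally (code_hi w j)))
           (Rbar_locally (code_lo w i)) (Rbar_locally (code_hi w i)).

Definition I2 (k : nat) (w rho : R) : R :=
  INR k * sum_f_R0 (fun i => sum_f_R0 (fun j =>
     (Derive (fun r => Pcell w r i j) rho) ^ 2 / Pcell w rho i j) 3) 3.

Definition I1 (k : nat) (rho : R) : R :=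
  2 * INR k * (1 / (4 * PI ^ 2 * (1 - rho ^ 2))) *
  (1 / (1/4 + asin rho / (2 * PI)) + 1 / (1/4 - asin rho / (2 * PI))).

Definition Rratio (k : nat) (w rho : R) : R := I2 k w rho / I1 k rho.

Definition g (w : R) : R :=
  1/2 * ((1 - exp (- w ^ 2 / 2)) ^ 2 / (Phi w - 1/2) + exp (- w ^ 2) / (1 - Phi w)).

(* Main.v *)
Require Import Defs.
From Stdlib Require Import Reals Lra Psatz FunctionalExtensionality Lia.
From Coquelicot Require Import Coquelicot.
Open Scope R_scope.


Lemma ftc_gen (F f : R -> R) (lo hi : Rbar) (la lb : R) :
  (forall x, is_derive F x (f x)) -> (forall x, continuous f x) ->
  filterlim F (Rbar_locally lo) (locally la) ->
  filterlim F (Rbar_locally hi) (locally lb) ->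
  is_RInt_gen f (Rbar_locally lo) (Rbar_locally hi) (lb - la).
Proof.
  intros HF Hc Ha Hb.
  assert (Hd : forall x, Derive F x = f x) by (intro x; apply is_derive_unique, HF).
  apply (is_RInt_gen_ext (Derive F)).
  - exists (fun _ => True) (fun _ => True); try (apply filter_true).
    intros; simpl. apply Hd.
  - apply is_RInt_gen_Derive; try apply Rbar_locally_filter; auto.
    + exists (fun _ => True) (fun _ => True); try apply filter_true.
      intros; eexists; apply HF.
    + exists (fun _ => True) (fun _ => True); try apply filter_true.
      intros. eapply continuous_ext. intro t. symmetry. apply Hd. apply Hc.
Qed.

Lemma cont_filterlim (F : R -> R) x : continuous F x ->
  filterlim F (Rbar_locally (Finite x)) (locally (F x)).
Proof. intro H. exact H. Qed.

Lemma exRc (f : R -> R) a b : (forall z, Rmin a b <= z <= Rmax a b -> continuous f z) -> ex_RInt f a b.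
Proof. intro H. exact (@ex_RInt_continuous R_CompleteNormedModule f a b H). Qed.

Lemma int_bound (f g G : R -> R) a b : a <= b ->
  (forall x, continuous f x) ->
  (forall x, a <= x <= b -> is_derive G x (g x)) ->
  (forall x, a <= x <= b -> continuous g x) ->
  (forall x, a <= x <= b -> Rabs (f x) <= g x) ->
  Rabs (RInt f a b) <= G b - G a.
Proof.
  intros Hab Hf HG Hg Hb.
  assert (HI : is_RInt g a b (G b - G a)).
  { replace (G b - G a) with (minus (G b) (G a)) by reflexivity.
    refine (@is_RInt_derive R_CompleteNormedModule G g a b _ _); rewrite Rmin_left, Rmax_right; auto. }
  eapply Rle_trans. apply abs_RInt_le; auto.
  apply exRc; intros; apply Hf.
  rewrite <- (is_RInt_unique _ _ _ _ HI).
  apply RInt_le; auto.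
  - apply exRc. intros z Hz.
    apply continuous_comp; [apply Hf| apply continuous_Rabs].
  - eexists; exact HI.
  - intros; apply Hb; lra.
Qed.

Lemma ballR (x y : R) (e : R) : Rabs (y - x) < e -> ball x e y.
Proof. intro H. exact H. Qed.

Lemma tail_bound (f : R -> R) K u v : (forall x, continuous f x) ->
  (forall x, Rabs (f x) <= K / (1 + x ^ 2)) -> 0 < u <= v \/ u <= v < 0 ->
  Rabs (RInt f u v) <= K / u - K / v.
Proof.
  intros Hc Hb Huv.
  replace (K / u - K / v) with ((fun x => - K / x) v - (fun x => - K / x) u) by (simpl; field; lra).
  apply (int_bound f (fun x => K / x ^ 2) (fun x => - K / x)).
  - lra.
  - exact Hc.
  - intros x Hx. assert (x <> 0) by lra.
    auto_derive; auto. field. auto.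
  - intros x Hx. assert (x <> 0) by lra.
    apply continuity_pt_filterlim. unfold Rdiv. apply continuity_pt_mult.
    apply continuity_pt_const. intros a b; auto.
    apply continuity_pt_inv. apply derivable_continuous_pt. apply derivable_pt_pow.
    apply pow_nonzero; auto.
  - intros x Hx. eapply Rle_trans. apply Hb.
    assert (0 <= K). { eapply Rle_trans. apply Rabs_pos. eapply Rle_trans. apply (Hb 0).
      apply Req_le. simpl. field. }
    assert (0 < x ^ 2) by (apply pow_lt_1_compat || nra).
    unfold Rdiv. apply Rmult_le_compat_l; auto.
    apply Rinv_le_contravar; nra.
Qed.

Lemma Kpos (f : R -> R) K : (forall x, Rabs (f x) <= K / (1 + x ^ 2)) -> 0 <= K.
Proof. intro Hb. eapply Rle_trans. apply Rabs_pos. eapply Rle_trans. apply (Hb 0).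
  apply Req_le. simpl. field. Qed.

Lemma RInt_diff (f : R -> R) u v : (forall x, continuous f x) ->
  RInt f 0 v - RInt f 0 u = RInt f u v.
Proof.
  intro Hc. rewrite <- (RInt_Chasles f 0 u v).
  - change (plus ?a ?b) with (a + b). ring.
  - apply exRc; intros; apply Hc.
  - apply exRc; intros; apply Hc.
Qed.

Lemma tail_p (f : R -> R) K : (forall x, continuous f x) ->
  (forall x, Rabs (f x) <= K / (1 + x ^ 2)) ->
  exists l, filterlim (fun t => RInt f 0 t) (Rbar_locally p_infty) (locally l).
Proof.
  intros Hc Hb. assert (HK := Kpos f K Hb).
  apply (filterlim_locally_cauchy (F := Rbar_locally p_infty)).
  intro eps. exists (fun t => Rmax 1 (K / eps) < t). split.
  - exists (Rmax 1 (K / eps)). auto.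
  - assert (Hgen : forall u v, Rmax 1 (K / eps) < u -> u <= v ->
        Rabs (RInt f 0 v - RInt f 0 u) < eps).
    { intros u v Hu Huv. rewrite RInt_diff; auto.
      assert (H1 : 1 < u) by (eapply Rle_lt_trans; [apply Rmax_l| exact Hu]).
      assert (H2 : K / eps < u) by (eapply Rle_lt_trans; [apply Rmax_r| exact Hu]).
      eapply Rle_lt_trans. apply (tail_bound f K u v); auto; lra.
      assert (0 <= K / v) by (apply Rdiv_le_0_compat; lra).
      assert (K / u < eps).
      { apply Rmult_lt_reg_r with u. lra. unfold Rdiv. rewrite Rmult_assoc, Rinv_l by lra.
        apply Rmult_lt_reg_r with (/ eps). apply Rinv_0_lt_compat, cond_pos.
        replace (eps * u * / eps) with u by (field; apply Rgt_not_eq, cond_pos). lra. }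
      lra. }
    intros u v Hu Hv. apply ballR.
    destruct (Rle_dec u v).
    + apply Hgen; auto.
    + rewrite Rabs_minus_sym. apply Hgen; auto; lra.
Qed.

Lemma tail_m (f : R -> R) K : (forall x, continuous f x) ->
  (forall x, Rabs (f x) <= K / (1 + x ^ 2)) ->
  exists l, filterlim (fun t => RInt f 0 t) (Rbar_locally m_infty) (locally l).
Proof.
  intros Hc Hb. assert (HK := Kpos f K Hb).
  apply (filterlim_locally_cauchy (F := Rbar_locally m_infty)).
  intro eps. exists (fun t => t < - Rmax 1 (K / eps)). split.
  - exists (- Rmax 1 (K / eps)). auto.
  - assert (Hgen : forall u v, v < - Rmax 1 (K / eps) -> u <= v ->
        Rabs (RInt f 0 v - RInt f 0 u) < eps).
    { intros u v Hu Huv. rewrite RInt_diff; auto.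
      assert (H1 : 1 < - v) by (generalize (Rmax_l 1 (K / eps)); lra).
      assert (H2 : K / eps < - v) by (generalize (Rmax_r 1 (K / eps)); lra).
      eapply Rle_lt_trans. apply (tail_bound f K u v); auto; lra.
      assert (K / u <= 0) by (unfold Rdiv; apply Rmult_le_0_l; [lra| left; apply Rinv_lt_0_compat; lra]).
      assert (- (K / v) < eps).
      { replace (- (K / v)) with (K / (- v)) by (field; lra).
        apply Rmult_lt_reg_r with (-v). lra. unfold Rdiv. rewrite Rmult_assoc, Rinv_l by lra.
        apply Rmult_lt_reg_r with (/ eps). apply Rinv_0_lt_compat, cond_pos.
        replace (eps * (-v) * / eps) with (-v) by (field; apply Rgt_not_eq, cond_pos). lra. }
      lra. }
    intros u v Hu Hv. apply ballR.
    destruct (Rle_dec u v).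
    + apply Hgen; auto.
    + rewrite Rabs_minus_sym. apply Hgen; auto; lra.
Qed.

Lemma F_derive (f : R -> R) x : (forall x, continuous f x) ->
  is_derive (fun t => RInt f 0 t) x (f x).
Proof.
  intro Hc. apply (is_derive_RInt f (fun t => RInt f 0 t) 0 x).
  - apply filter_forall. intro b. apply (RInt_correct (V:=R_CompleteNormedModule)).
    apply exRc; intros; apply Hc.
  - apply Hc.
Qed.

Lemma F_lim (f : R -> R) K (c : Rbar) : (forall x, continuous f x) ->
  (forall x, Rabs (f x) <= K / (1 + x ^ 2)) ->
  exists l, filterlim (fun t => RInt f 0 t) (Rbar_locally c) (locally l).
Proof.
  intros Hc Hb. destruct c as [c| |].
  - exists (RInt f 0 c). apply (ex_derive_continuous (K:=R_AbsRing) (V:=R_NormedModule) (fun t => RInt f 0 t)). eexists. apply F_derive; auto.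
  - eapply tail_p; eauto.
  - eapply tail_m; eauto.
Qed.

Lemma dom_ex (f : R -> R) K (lo hi : Rbar) : (forall x, continuous f x) ->
  (forall x, Rabs (f x) <= K / (1 + x ^ 2)) ->
  exists v, is_RInt_gen f (Rbar_locally lo) (Rbar_locally hi) v.
Proof.
  intros Hc Hb. destruct (F_lim f K lo Hc Hb) as [la Ha].
  destruct (F_lim f K hi Hc Hb) as [lb Hb'].
  exists (lb - la). apply (ftc_gen (fun t => RInt f 0 t)); auto.
  intro; apply F_derive; auto.
Qed.

Lemma gen_unique (f : R -> R) (lo hi : Rbar) v :
  is_RInt_gen f (Rbar_locally lo) (Rbar_locally hi) v ->
  RInt_gen f (Rbar_locally lo) (Rbar_locally hi) = v.
Proof. intro H. apply is_RInt_gen_unique; auto. Qed.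

Lemma c0_pos : 0 < / sqrt (2 * PI).
Proof. apply Rinv_0_lt_compat, sqrt_lt_R0. generalize PI_RGT_0; lra. Qed.

Lemma c0_le1 : / sqrt (2 * PI) <= 1.
Proof.
  assert (1 <= sqrt (2 * PI)).
  { rewrite <- sqrt_1. apply sqrt_le_1_alt. generalize PI2_1; lra. }
  rewrite <- Rinv_1. apply Rinv_le_contravar; lra.
Qed.

Lemma phi_pos x : 0 < phi x.
Proof. unfold phi. apply Rmult_lt_0_compat. apply c0_pos. apply exp_pos. Qed.

Lemma phi_le_exp x : phi x <= exp (- x ^ 2 / 2).
Proof. unfold phi. generalize c0_le1 (exp_pos (- x ^ 2 / 2)). nra. Qed.

Lemma phi_derive (x : R) : is_derive phi x (- x * phi x).
Proof. unfold phi. auto_derive; auto.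
  replace (- (x * (x * 1)) * / 2) with (- x ^ 2 / 2) by field. field. apply Rgt_not_eq, sqrt_lt_R0. generalize PI_RGT_0; lra. Qed.

Lemma phi_cont (x : R) : continuous phi x.
Proof. apply (ex_derive_continuous (K:=R_AbsRing) (V:=R_NormedModule)). eexists; apply phi_derive. Qed.

Lemma exp_half_bound x : (1 + x ^ 2) ^ 2 * exp (- x ^ 2 / 2) <= 16.
Proof.
  assert (H1 := exp_ineq1_le (x ^ 2 / 4)).
  assert (H2 : exp (x ^ 2 / 2) = exp (x ^ 2 / 4) * exp (x ^ 2 / 4)).
  { rewrite <- exp_plus. f_equal. field. }
  assert (H3 : exp (- x ^ 2 / 2) = / exp (x ^ 2 / 2)).
  { rewrite <- exp_Ropp. f_equal. field. }
  rewrite H3. assert (Hp := exp_pos (x ^ 2 / 2)).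
  apply Rmult_le_reg_r with (exp (x ^ 2 / 2)); auto.
  rewrite Rmult_assoc, Rinv_l by lra. rewrite Rmult_1_r, H2.
  assert (0 <= x ^ 2) by nra.
  assert (1 + x^2/4 <= exp (x ^ 2 / 4)) by lra.
  assert (0 <= 1 + x ^ 2 / 4) by lra.
  assert ((1 + x^2/4) * (1 + x^2/4) <= exp (x ^ 2 / 4) * exp (x ^ 2 / 4)).
  { apply Rmult_le_compat; lra. }
  nra.
Qed.

Lemma dom_of (h : R -> R) K x : 0 <= K -> Rabs (h x) <= K * (1 + x ^ 2) * exp (- x ^ 2 / 2) ->
  Rabs (h x) <= 16 * K / (1 + x ^ 2).
Proof.
  intros HK H. assert (Hx : 0 < 1 + x ^ 2) by nra.
  assert (E := exp_half_bound x).
  apply Rmult_le_reg_r with (1 + x ^ 2); auto.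
  replace (16 * K / (1 + x ^ 2) * (1 + x ^ 2)) with (16 * K) by (field; lra).
  eapply Rle_trans. apply Rmult_le_compat_r. lra. exact H.
  replace (K * (1 + x ^ 2) * exp (- x ^ 2 / 2) * (1 + x ^ 2)) with (K * ((1 + x ^ 2) ^ 2 * exp (- x ^ 2 / 2))) by ring.
  nra.
Qed.

Lemma phi_dom x : Rabs (phi x) <= 16 / (1 + x ^ 2).
Proof.
  replace (16 / (1 + x^2)) with (16 * 1 / (1 + x^2)) by (unfold Rdiv; ring).
  apply (dom_of phi). lra. rewrite Rabs_pos_eq by (left; apply phi_pos).
  generalize (phi_le_exp x) (exp_pos (- x ^ 2 / 2)). nra.
Qed.

Lemma xphi_dom x : Rabs (x * phi x) <= 16 / (1 + x ^ 2).
Proof.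
  replace (16 / (1 + x^2)) with (16 * 1 / (1 + x^2)) by (unfold Rdiv; ring).
  apply (dom_of (fun x => x * phi x)). lra. cbv beta. rewrite Rabs_mult, (Rabs_pos_eq (phi x)) by (left; apply phi_pos).
  assert (Rabs x <= 1 + x ^ 2) by (destruct (Rabs_pos x); unfold Rabs; destruct Rcase_abs; nra).
  generalize (phi_le_exp x) (exp_pos (- x ^ 2 / 2)) (phi_pos x) (Rabs_pos x). nra.
Qed.

Lemma phi_le1 x : phi x <= 1.
Proof. generalize (phi_le_exp x). assert (exp (- x ^ 2 / 2) <= 1).
  { rewrite <- exp_0. destruct (Req_dec x 0). subst. right; f_equal; simpl; field.
    left. apply exp_increasing. nra. } lra. Qed.

Lemma phi_lip t v : Rabs (phi t - phi v) <= Rabs (t - v).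
Proof.
  destruct (MVT_abs phi (fun x => - x * phi x) v t) as [c [Hc _]].
  { intros; apply is_derive_Reals, phi_derive. }
  rewrite Hc. rewrite <- (Rmult_1_l (Rabs (t - v))) at 2.
  apply Rmult_le_compat_r. apply Rabs_pos.
  rewrite Rabs_mult, (Rabs_pos_eq (phi c)) by (left; apply phi_pos).
  rewrite Rabs_Ropp.
  assert (Rabs c <= 1 + c ^ 2 / 2) by (unfold Rabs; destruct Rcase_abs; nra).
  assert (H1 := exp_ineq1_le (c ^ 2 / 2)).
  assert (H2 : exp (- c ^ 2 / 2) * exp (c ^ 2 / 2) = 1).
  { rewrite <- exp_plus. replace (- c ^ 2 / 2 + c ^ 2 / 2) with 0 by field. apply exp_0. }
  generalize (phi_le_exp c) (phi_pos c) (Rabs_pos c) (exp_pos (- c ^ 2 / 2)). nra.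
Qed.

Definition gam (x : R) := exp (- x ^ 2 / 2).
Definition Ig (t : R) := RInt gam 0 t.
Definition fB (u s : R) := exp (- (u ^ 2 * (1 + s ^ 2)) / 2) / (1 + s ^ 2).
Definition Bf (t : R) := 2 * RInt (fun s => fB t s) 0 1.

Lemma gam_cont (x : R) : continuous gam x.
Proof. unfold gam. apply (ex_derive_continuous (K:=R_AbsRing) (V:=R_NormedModule)). auto_derive; auto. Qed.

Lemma fB_cont (u s : R) : continuous (fB u) s.
Proof. unfold fB. apply (ex_derive_continuous (K:=R_AbsRing) (V:=R_NormedModule)).
  auto_derive; auto. nra. Qed.

Lemma dfB (u s : R) : is_derive (fun z => fB z s) u (- u * gam u * gam (u * s)).
Proof.
  unfold fB, gam. auto_derive. nra.
  replace (- u * exp (- u ^ 2 / 2) * exp (- (u * s) ^ 2 / 2)) with (- u * exp (- u ^ 2 / 2 + - (u * s) ^ 2 / 2)) by (rewrite exp_plus; ring).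
  replace (- (u * (u * 1) * (1 + s * (s * 1))) * / 2) with (- u ^ 2 / 2 + - (u * s) ^ 2 / 2) by field.
  field. nra.
Qed.

Lemma Bf_derive (t : R) : is_derive Bf t (- 2 * gam t * Ig t).
Proof.
  unfold Bf.
  assert (H : is_derive (fun x0 => RInt (fun s => fB x0 s) 0 1) t
            (RInt (fun s => Derive (fun u => fB u s) t) 0 1)).
  { apply (is_derive_RInt_param fB 0 1 t).
    - apply filter_forall. intros x0 s _. eexists. apply dfB.
    - intros s _. apply continuity_2d_pt_ext with (fun u v => - u * gam u * gam (u * v)).
      + intros u v. symmetry. apply is_derive_unique, dfB.
      + unfold gam. apply continuity_2d_pt_mult. apply continuity_2d_pt_mult.
        apply continuity_2d_pt_opp, continuity_2d_pt_id1.
        apply continuity_1d_2d_pt_comp. apply derivable_continuous_pt, derivable_pt_exp.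
        apply continuity_2d_pt_ext with (fun u v => (- (u * u) / 2)).
        intros; simpl; field.
        unfold Rdiv. apply continuity_2d_pt_mult. apply continuity_2d_pt_opp, continuity_2d_pt_mult;
          apply continuity_2d_pt_id1. apply continuity_2d_pt_const.
        apply continuity_1d_2d_pt_comp. apply derivable_continuous_pt, derivable_pt_exp.
        apply continuity_2d_pt_ext with (fun u v => (- ((u * v) * (u * v)) / 2)).
        intros; simpl; field.
        unfold Rdiv. apply continuity_2d_pt_mult. apply continuity_2d_pt_opp, continuity_2d_pt_mult;
          apply continuity_2d_pt_mult; first [apply continuity_2d_pt_id1|apply continuity_2d_pt_id2].
        apply continuity_2d_pt_const.
    - apply filter_forall. intro y. apply exRc. intros; apply fB_cont. }
  assert (E : RInt (fun s => Derive (fun u => fB u s) t) 0 1 = - gam t * Ig t).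
  { rewrite (RInt_ext _ (fun s => scal (- gam t) (scal t (gam (t * s + 0))))).
    2: { intros s _. transitivity (- t * gam t * gam (t * s)). apply is_derive_unique, dfB. rewrite Rplus_0_r.
         unfold scal; simpl; unfold mult; simpl. ring. }
    rewrite (RInt_scal (V:=R_CompleteNormedModule)).
    rewrite (RInt_comp_lin (V:=R_CompleteNormedModule)).
    unfold Ig. replace (t * 0 + 0) with 0 by ring. replace (t * 1 + 0) with t by ring. reflexivity.
    apply exRc; intros; apply gam_cont.
    apply exRc; intros. apply (continuous_ext (fun s => t * exp (- (t * s + 0) ^ 2 / 2))).
    intros; reflexivity.
    apply (ex_derive_continuous (K:=R_AbsRing) (V:=R_NormedModule)). auto_derive; auto. }
  rewrite E in H. replace (- 2 * gam t * Ig t) with (2 * (- gam t * Ig t)) by ring.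
  apply (is_derive_scal (fun x0 => RInt (fun s => fB x0 s) 0 1)). exact H.
Qed.

Lemma Ig_derive (t : R) : is_derive Ig t (gam t).
Proof. apply F_derive. apply gam_cont. Qed.

Lemma Bf0 : Bf 0 = PI / 2.
Proof.
  unfold Bf. rewrite (RInt_ext _ (fun s => / (1 + s ^ 2))).
  2: { intros x _; unfold fB. change (exp (- (0 ^ 2 * (1 + x ^ 2)) / 2) / (1 + x ^ 2) = / (1 + x ^ 2)). replace (- (0 ^ 2 * (1 + x ^ 2)) / 2) with 0 by field. rewrite exp_0. unfold Rdiv; ring. }
  assert (H : is_RInt (fun s => / (1 + s ^ 2)) 0 1 (minus (atan 1) (atan 0))).
  { apply (is_RInt_derive (V:=R_CompleteNormedModule) atan). intros x _.
    replace (1 + x ^ 2) with (1 + x²) by (unfold Rsqr; ring). apply is_derive_atan.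
    intros x _. apply (ex_derive_continuous (K:=R_AbsRing) (V:=R_NormedModule)). auto_derive. nra. }
  rewrite (is_RInt_unique _ _ _ _ H). rewrite atan_1, atan_0. unfold minus, plus, opp; simpl. field.
Qed.

Lemma AB_const (t : R) : Ig t ^ 2 + Bf t = PI / 2.
Proof.
  set (h := fun x => Ig x ^ 2 + Bf x).
  assert (Hd : forall x, is_derive h x 0).
  { intro x. unfold h. replace 0 with (INR 2 * gam x * Ig x ^ Init.Nat.pred 2 + (- 2 * gam x * Ig x)) by (simpl; ring).
    apply (is_derive_plus (fun x => Ig x ^ 2) Bf).
    apply (is_derive_pow Ig 2 x (gam x)). apply Ig_derive. apply Bf_derive. }
  assert (h0 : h 0 = PI / 2).
  { unfold h. rewrite Bf0. unfold Ig. rewrite RInt_point. simpl. unfold zero; simpl. ring. }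
  change (h t = PI / 2). rewrite <- h0.
  destruct (MVT_gen h 0 t (fun _ => 0)) as [c [_ Hc]].
  - intros; apply Hd.
  - intros. apply continuity_pt_filterlim. apply (ex_derive_continuous (K:=R_AbsRing) (V:=R_NormedModule)). eexists; apply Hd.
  - lra.
Qed.

Lemma gam_bound (t : R) : 0 < gam t <= 16 / (1 + t ^ 2).
Proof.
  split. apply exp_pos.
  assert (H := exp_half_bound t). fold (gam t) in H. assert (0 < gam t) by apply exp_pos.
  assert (0 < 1 + t ^ 2) by nra.
  apply Rmult_le_reg_r with (1 + t ^ 2); auto. unfold Rdiv. rewrite Rmult_assoc, Rinv_l by lra.
  nra.
Qed.

Lemma Bf_bound (t : R) : 0 <= Bf t <= 2 * gam t.
Proof.
  unfold Bf.
  assert (Hex : ex_RInt (fun s => fB t s) 0 1) by (apply exRc; intros; apply fB_cont).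
  assert (Hfb : forall s, 0 <= fB t s <= gam t).
  { intro s. unfold fB, gam. assert (0 < 1 + s ^ 2) by nra. split.
    apply Rdiv_le_0_compat. left; apply exp_pos. lra.
    assert (exp (- (t ^ 2 * (1 + s ^ 2)) / 2) <= exp (- t ^ 2 / 2)).
    { apply exp_le_3 || idtac. destruct (Req_dec (- (t ^ 2 * (1 + s ^ 2)) / 2) (- t ^ 2 / 2)) as [E|E].
      rewrite E; lra. left; apply exp_increasing. nra. }
    apply Rmult_le_reg_r with (1 + s ^ 2); auto. unfold Rdiv. rewrite Rmult_assoc, Rinv_l by lra.
    assert (0 < exp (- t ^ 2 / 2)) by apply exp_pos. nra. }
  split.
  - apply Rmult_le_pos. lra. apply RInt_ge_0; auto. lra. intros; apply Hfb.
  - apply Rmult_le_compat_l. lra.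
    replace (gam t) with (RInt (fun _ => gam t) 0 1).
    apply RInt_le; auto. lra. apply exRc; intros; apply continuous_const.
    intros; apply Hfb.
    rewrite RInt_const. unfold scal; simpl; unfold mult; simpl. ring.
Qed.

Lemma Ig_pos (t : R) : 0 <= t -> 0 <= Ig t.
Proof. intro Ht. unfold Ig. apply RInt_ge_0; auto. apply exRc; intros; apply gam_cont.
  intros; left; apply exp_pos. Qed.

Lemma Ig_lim : filterlim Ig (Rbar_locally p_infty) (locally (sqrt (PI / 2))).
Proof.
  apply (filterlim_ext_loc (fun t => sqrt (PI / 2 - Bf t))).
  { exists 0. intros t Ht. rewrite <- (AB_const t). replace (Ig t ^ 2 + Bf t - Bf t) with (Ig t * Ig t) by ring.
    apply sqrt_square. apply Ig_pos. lra. }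
  apply (filterlim_comp _ _ _ (fun t => PI / 2 - Bf t) sqrt _ (locally (PI / 2))).
  - apply filterlim_locally. intro eps.
    exists (32 / eps). intros t Ht. apply ballR.
    assert (Hep := cond_pos eps).
    assert (0 < t). { apply Rle_lt_trans with (32 / eps); auto. apply Rdiv_le_0_compat; lra. }
    destruct (Bf_bound t). destruct (gam_bound t).
    replace (PI / 2 - Bf t - PI / 2) with (- Bf t) by ring. rewrite Rabs_Ropp, Rabs_pos_eq by lra.
    assert (16 / (1 + t ^ 2) < eps / 2).
    { apply Rmult_lt_reg_r with (1 + t ^ 2). nra. unfold Rdiv. rewrite Rmult_assoc, Rinv_l by nra.
      assert (32 < eps * t).
      { apply Rmult_lt_reg_r with (/ eps). apply Rinv_0_lt_compat; lra.
        replace (eps * t * / eps) with t by (field; lra). exact Ht. }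
      nra. }
    lra.
  - apply continuity_pt_filterlim. apply continuity_pt_sqrt. generalize PI_RGT_0; lra.
Qed.

Definition Ef (x : R) := RInt phi 0 x.
Definition Ph (x : R) := Ef x + 1 / 2.

Lemma Ef_Ig x : Ef x = / sqrt (2 * PI) * Ig x.
Proof.
  unfold Ef, Ig. rewrite <- (RInt_scal (V:=R_CompleteNormedModule)).
  apply RInt_ext. intros; reflexivity. apply exRc; intros; apply gam_cont.
Qed.

Lemma Ef_derive (x : R) : is_derive Ef x (phi x).
Proof. apply F_derive. apply phi_cont. Qed.

Lemma Ph_derive (x : R) : is_derive Ph x (phi x).
Proof. unfold Ph. replace (phi x) with (phi x + 0) by ring.
  apply (is_derive_plus Ef (fun _ => 1/2)). apply Ef_derive. apply (@is_derive_const R_AbsRing R_NormedModule). Qed.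

Lemma Ph_cont (x : R) : continuous Ph x.
Proof. apply (ex_derive_continuous (K:=R_AbsRing) (V:=R_NormedModule)). eexists; apply Ph_derive. Qed.

Lemma phi_even x : phi (- x) = phi x.
Proof. unfold phi. replace ((- x) ^ 2) with (x ^ 2) by ring. reflexivity. Qed.

Lemma Ef_odd (x : R) : Ef (- x) = - Ef x.
Proof.
  set (h := fun x => Ef (- x) + Ef x).
  assert (Hd : forall x, is_derive h x 0).
  { intro y. unfold h. replace 0 with (- 1 * phi (- y) + phi y) by (rewrite phi_even; ring).
    apply (is_derive_plus (fun x => Ef (- x)) Ef).
    apply (is_derive_comp Ef Ropp). apply Ef_derive.
    apply (@is_derive_ext R_AbsRing R_NormedModule (fun t => - t)). reflexivity. auto_derive; auto; try ring.
    apply Ef_derive. }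
  assert (h0 : h 0 = 0).
  { unfold h, Ef. rewrite Ropp_0, RInt_point. unfold zero; simpl. ring. }
  assert (h x = 0).
  { rewrite <- h0. destruct (MVT_gen h 0 x (fun _ => 0)) as [c [_ Hc]].
    - intros; apply Hd.
    - intros. apply continuity_pt_filterlim. apply (ex_derive_continuous (K:=R_AbsRing) (V:=R_NormedModule)). eexists; apply Hd.
    - lra. }
  unfold h in H. lra.
Qed.

Lemma c0_sqrt : / sqrt (2 * PI) * sqrt (PI / 2) = 1 / 2.
Proof.
  assert (HP := PI_RGT_0).
  assert (E : sqrt (2 * PI) = 2 * sqrt (PI / 2)).
  { replace (2 * PI) with (4 * (PI / 2)) by field. rewrite sqrt_mult by lra.
    replace 4 with (2 * 2) by ring. rewrite sqrt_square by lra. reflexivity. }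
  rewrite E. assert (0 < sqrt (PI / 2)) by (apply sqrt_lt_R0; lra). field. lra.
Qed.

Lemma Ef_bound x : Rabs (Ef x) <= 1 / 2.
Proof.
  assert (Hy : forall y, 0 <= y -> 0 <= Ef y <= 1 / 2).
  { intros y Hy. rewrite Ef_Ig. rewrite <- c0_sqrt.
    assert (Hc := c0_pos). split. apply Rmult_le_pos. lra. apply Ig_pos; auto.
    apply Rmult_le_compat_l. lra.
    rewrite <- (sqrt_square (Ig y)) by (apply Ig_pos; auto).
    apply sqrt_le_1_alt. generalize (AB_const y) (Bf_bound y). simpl. nra. }
  destruct (Rle_dec 0 x).
  - destruct (Hy x r). rewrite Rabs_pos_eq; lra.
  - replace x with (- - x) by ring. rewrite Ef_odd. destruct (Hy (- x)). lra.
    rewrite Rabs_Ropp, Rabs_pos_eq; lra.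
Qed.

Lemma Ph_01 x : 0 <= Ph x <= 1.
Proof. unfold Ph. generalize (Ef_bound x). unfold Rabs; destruct Rcase_abs; lra. Qed.

Definition Qe (c : Rbar) : R := match c with Finite c => Ph c | p_infty => 1 | m_infty => 0 end.
Definition phiE (c : Rbar) : R := match c with Finite c => phi c | _ => 0 end.

Lemma Ef_lim_p : filterlim Ef (Rbar_locally p_infty) (locally (1 / 2)).
Proof.
  apply (filterlim_ext (fun x => / sqrt (2 * PI) * Ig x)). intro; symmetry; apply Ef_Ig.
  rewrite <- c0_sqrt. apply (filterlim_comp _ _ _ Ig (fun y => / sqrt (2 * PI) * y) _ (locally (sqrt (PI / 2)))).
  apply Ig_lim. apply continuity_pt_filterlim. apply continuity_pt_mult.
  apply continuity_pt_const. intros a b; auto. apply continuity_pt_id.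
Qed.

Lemma Ph_lim (c : Rbar) : filterlim Ph (Rbar_locally c) (locally (Qe c)).
Proof.
  destruct c as [c| |]; simpl.
  - apply Ph_cont.
  - unfold Ph.
    apply filterlim_locally. intro eps. generalize (proj1 (filterlim_locally _ _) Ef_lim_p eps).
    intros [M HM]. exists M. intros x Hx. apply ballR. specialize (HM x Hx). unfold ball in HM; simpl in HM.
    unfold AbsRing_ball, abs, minus, plus, opp in HM; simpl in HM.
    replace (Ef x + 1 / 2 - 1) with (Ef x + - (1 / 2)) by field. exact HM.
  - unfold Ph.
    apply filterlim_locally. intro eps. generalize (proj1 (filterlim_locally _ _) Ef_lim_p eps).
    intros [M HM]. exists (- M). intros x Hx. apply ballR. specialize (HM (- x) ltac:(lra)). unfold ball in HM; simpl in HM.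
    unfold AbsRing_ball, abs, minus, plus, opp in HM; simpl in HM.
    rewrite Ef_odd in HM. replace (Ef x + 1 / 2 - 0) with (- (- Ef x + - (1 / 2))) by ring.
    rewrite Rabs_Ropp. exact HM.
Qed.

Lemma phi_lim (c : Rbar) : filterlim phi (Rbar_locally c) (locally (phiE c)).
Proof.
  assert (Hgen : forall eps : posreal, exists M, forall x, M < Rabs x -> Rabs (phi x) < eps).
  { intro eps. assert (Hep := cond_pos eps). exists (16 / eps). intros x Hx.
    eapply Rle_lt_trans. apply phi_dom.
    assert (0 < Rabs x). { apply Rle_lt_trans with (16 / eps); auto. apply Rdiv_le_0_compat; lra. }
    assert (x ^ 2 = Rabs x * Rabs x) by (unfold Rabs; destruct Rcase_abs; ring).
    apply Rmult_lt_reg_r with (1 + x ^ 2). nra. unfold Rdiv. rewrite Rmult_assoc, Rinv_l by nra.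
    assert (16 < eps * Rabs x).
    { apply Rmult_lt_reg_r with (/ eps). apply Rinv_0_lt_compat; lra.
      replace (eps * Rabs x * / eps) with (Rabs x) by (field; lra). exact Hx. }
    nra. }
  destruct c as [c| |]; simpl.
  - apply phi_cont.
  - apply filterlim_locally. intro eps. destruct (Hgen eps) as [M HM].
    exists (Rabs M). intros x Hx. apply ballR. rewrite Rminus_0_r. apply HM.
    generalize (Rle_abs M) (Rle_abs x) (Rle_abs (- x)); rewrite Rabs_Ropp; lra.
  - apply filterlim_locally. intro eps. destruct (Hgen eps) as [M HM].
    exists (- Rabs M). intros x Hx. apply ballR. rewrite Rminus_0_r. apply HM.
    generalize (Rle_abs M) (Rle_abs x) (Rle_abs (- x)); rewrite Rabs_Ropp; lra.
Qed.

Lemma phi_gen (lo hi : Rbar) :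
  is_RInt_gen phi (Rbar_locally lo) (Rbar_locally hi) (Qe hi - Qe lo).
Proof. apply (ftc_gen Ph). apply Ph_derive. apply phi_cont. apply Ph_lim. apply Ph_lim. Qed.

Lemma xphi_gen (lo hi : Rbar) :
  is_RInt_gen (fun x => x * phi x) (Rbar_locally lo) (Rbar_locally hi) (phiE lo - phiE hi).
Proof.
  replace (phiE lo - phiE hi) with (- phiE hi - - phiE lo) by ring.
  apply (ftc_gen (fun x => - phi x)).
  - intro x. replace (x * phi x) with (- (- x * phi x)) by ring. apply (is_derive_opp phi). apply phi_derive.
  - intro x. apply (ex_derive_continuous (K:=R_AbsRing) (V:=R_NormedModule)). eexists.
    apply (is_derive_mult (fun x => x) phi). apply is_derive_id. apply phi_derive. intros; apply Rmult_comm.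
  - eapply filterlim_comp. apply phi_lim. apply continuity_pt_filterlim, continuity_pt_opp, continuity_pt_id.
  - eapply filterlim_comp. apply phi_lim. apply continuity_pt_filterlim, continuity_pt_opp, continuity_pt_id.
Qed.

Lemma Phi_Ph x : Phi x = Ph x.
Proof.
  unfold Phi. apply gen_unique. replace (Ph x) with (Qe (Finite x) - Qe m_infty) by (simpl; ring).
  apply phi_gen.
Qed.

Definition sr (r : R) := sqrt (1 - r ^ 2).

Lemma sr_pos r : -1 < r < 1 -> 0 < sr r.
Proof. intro. unfold sr. apply sqrt_lt_R0. nra. Qed.

Lemma sr_sq r : -1 < r < 1 -> sr r * sr r = 1 - r ^ 2.
Proof. intro. unfold sr. apply sqrt_sqrt. nra. Qed.

Lemma phi2_fact r x y : -1 < r < 1 ->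
  phi2 r x y = phi x * (phi ((y - r * x) / sr r) / sr r).
Proof.
  intro Hr. assert (Hs := sr_pos r Hr). assert (Hs2 := sr_sq r Hr).
  assert (HP := PI_RGT_0).
  assert (Hq : sqrt (2 * PI) * sqrt (2 * PI) = 2 * PI) by (apply sqrt_sqrt; lra).
  assert (Hq0 : 0 < sqrt (2 * PI)) by (apply sqrt_lt_R0; lra).
  unfold phi2, phi.
  replace (sqrt (1 - r ^ 2)) with (sr r) by reflexivity.
  replace (exp (- x ^ 2 / 2)) with (exp (- x ^ 2 / 2)) by reflexivity.
  transitivity (/ sqrt (2 * PI) * / sqrt (2 * PI) * / sr r * (exp (- x ^ 2 / 2) * exp (- ((y - r * x) / sr r) ^ 2 / 2))).
  - rewrite <- exp_plus. f_equal.
    + replace (2 * PI * sr r) with (sqrt (2 * PI) * sqrt (2 * PI) * sr r) by (rewrite Hq; ring). field. lra.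
    + apply (f_equal exp). rewrite <- Hs2. replace (x ^ 2 - 2 * r * x * y + y ^ 2) with ((y - r * x) ^ 2 + x ^ 2 * (sr r * sr r)) by (rewrite Hs2; ring). field. lra.
  - field. lra.
Qed.

Definition Qr (r x : R) (c : Rbar) : R :=
  match c with Finite c => Ph ((c - r * x) / sr r) | p_infty => 1 | m_infty => 0 end.

Definition linb (r x : R) (c : Rbar) : Rbar :=
  match c with Finite c => Finite ((c - r * x) / sr r) | p_infty => p_infty | m_infty => m_infty end.

Lemma lin_lim r x (c : Rbar) : -1 < r < 1 ->
  filterlim (fun y => (y - r * x) / sr r) (Rbar_locally c) (Rbar_locally (linb r x c)).
Proof.
  intro Hr. assert (Hs := sr_pos r Hr).
  destruct c as [c| |]; simpl.
  - apply (ex_derive_continuous (K:=R_AbsRing) (V:=R_NormedModule) (fun y => (y - r * x) / sr r)).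
    auto_derive. lra.
  - intros P [M HM]. exists (M * sr r + r * x). intros y Hy. apply HM.
    apply Rmult_lt_reg_r with (sr r); auto. unfold Rdiv. rewrite Rmult_assoc, Rinv_l by lra. lra.
  - intros P [M HM]. exists (M * sr r + r * x). intros y Hy. apply HM.
    apply Rmult_lt_reg_r with (sr r); auto. unfold Rdiv. rewrite Rmult_assoc, Rinv_l by lra. lra.
Qed.

Lemma inner r x (lo hi : Rbar) : -1 < r < 1 ->
  is_RInt_gen (fun y => phi2 r x y) (Rbar_locally lo) (Rbar_locally hi) (phi x * (Qr r x hi - Qr r x lo)).
Proof.
  intro Hr. assert (Hs := sr_pos r Hr).
  assert (Hl : forall c, filterlim (fun y => phi x * Ph ((y - r * x) / sr r)) (Rbar_locally c) (locally (phi x * Qr r x c))).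
  { intro c. apply (filterlim_comp _ _ _ (fun y => Ph ((y - r * x) / sr r)) (fun z => phi x * z) _ (locally (Qr r x c))).
    - eapply filterlim_comp. apply lin_lim; auto.
      destruct c; simpl; apply (Ph_lim (Finite _)) || apply (Ph_lim p_infty) || apply (Ph_lim m_infty).
    - apply continuity_pt_filterlim. apply continuity_pt_mult. apply continuity_pt_const. intros a b; auto.
      apply continuity_pt_id. }
  replace (phi x * (Qr r x hi - Qr r x lo)) with (phi x * Qr r x hi - phi x * Qr r x lo) by ring.
  apply (ftc_gen (fun y => phi x * Ph ((y - r * x) / sr r))); auto.
  - intro y. rewrite phi2_fact by auto.
    apply (is_derive_scal (fun y => Ph ((y - r * x) / sr r))).
    replace (phi ((y - r * x) / sr r) / sr r) with (/ sr r * phi ((y - r * x) / sr r)) by (field; lra).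
    apply (is_derive_comp Ph (fun y => (y - r * x) / sr r)). apply Ph_derive.
    auto_derive. lra. field. lra.
  - intro y. apply (continuous_ext (fun y => phi x * (phi ((y - r * x) / sr r) / sr r))).
    intros; symmetry; apply phi2_fact; auto.
    apply (ex_derive_continuous (K:=R_AbsRing) (V:=R_NormedModule)). unfold phi. auto_derive. lra.
Qed.

Lemma sq_abs x : x ^ 2 = Rabs x * Rabs x.
Proof. rewrite <- pow2_abs. ring. Qed.

Lemma Ph_taylor u c : Rabs (Ph u - Ph c - phi c * (u - c)) <= (u - c) ^ 2.
Proof.
  destruct (MVT_abs (fun t => Ph t - phi c * t) (fun t => phi t - phi c) c u) as [z [Hz Hzr]].
  { intros t _. apply is_derive_Reals.
    apply (is_derive_minus Ph (fun t => phi c * t)). apply Ph_derive.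
    apply (@is_derive_ext R_AbsRing R_NormedModule (fun t => phi c * t)). reflexivity.
    auto_derive; auto; ring. }
  replace (Ph u - Ph c - phi c * (u - c)) with ((Ph u - phi c * u) - (Ph c - phi c * c)) by ring.
  rewrite Hz.
  assert (Rabs (phi z - phi c) <= Rabs (u - c)).
  { eapply Rle_trans. apply phi_lip. destruct Hzr as [H1 H2].
    unfold Rmin, Rmax in *; destruct Rle_dec; unfold Rabs; repeat destruct Rcase_abs; lra. }
  replace ((u - c) ^ 2) with (Rabs (u - c) * Rabs (u - c)) by (rewrite <- sq_abs; ring).
  apply Rmult_le_compat_r. apply Rabs_pos. auto.
Qed.

Lemma sr_bounds r : Rabs r <= 1 / 2 -> 1 / 2 <= sr r /\ 0 <= / sr r - 1 <= 2 * r ^ 2.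
Proof.
  intro Hr. assert (Hr' : -1 < r < 1) by (unfold Rabs in Hr; destruct Rcase_abs in Hr; lra).
  assert (Hs := sr_pos r Hr'). assert (Hs2 := sr_sq r Hr').
  assert (r ^ 2 <= 1 / 4) by (unfold Rabs in Hr; destruct Rcase_abs in Hr; nra).
  assert (1 / 2 <= sr r) by nra.
  assert (sr r <= 1) by nra.
  split; auto.
  replace (/ sr r - 1) with ((1 - sr r) / sr r) by (field; lra).
  assert (1 - sr r = r ^ 2 / (1 + sr r)) by (replace (r ^ 2) with (1 - sr r * sr r) by lra; field; lra).
  split. apply Rdiv_le_0_compat; lra.
  rewrite H2. assert (0 <= r ^ 2) by nra.
  replace (r ^ 2 / (1 + sr r) / sr r) with (r ^ 2 * / (sr r * (1 + sr r))) by (field; lra).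
  assert (/ (sr r * (1 + sr r)) <= 2).
  { replace 2 with (/ (1/2)) by field. apply Rinv_le_contravar. lra. nra. }
  nra.
Qed.

Lemma Qtaylor r x c : Rabs r <= 1 / 2 ->
  Rabs (Ph ((c - r * x) / sr r) - Ph c + r * x * phi c) <= 4 * r ^ 2 * (1 + Rabs c + Rabs x) ^ 2.
Proof.
  intro Hr. destruct (sr_bounds r Hr) as [Hs [Hi1 Hi2]].
  set (u := (c - r * x) / sr r). set (d := u - c).
  assert (Hdr : d + r * x = (c - r * x) * (/ sr r - 1)) by (unfold d, u; field; lra).
  assert (Ha : Rabs (c - r * x) <= Rabs c + Rabs x).
  { eapply Rle_trans. apply Rabs_triang. rewrite Rabs_Ropp, Rabs_mult.
    assert (Rabs r * Rabs x <= Rabs x) by (generalize (Rabs_pos x); nra). lra. }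
  assert (Hd1 : Rabs (d + r * x) <= 2 * r ^ 2 * (Rabs c + Rabs x)).
  { rewrite Hdr, Rabs_mult, (Rabs_pos_eq (/ sr r - 1)) by lra.
    generalize (Rabs_pos (c - r * x)). nra. }
  assert (Hr2 : r ^ 2 = Rabs r * Rabs r) by apply sq_abs.
  assert (Hd2 : Rabs d <= 2 * Rabs r * (Rabs c + Rabs x)).
  { replace d with ((d + r * x) - r * x) by ring.
    eapply Rle_trans. apply Rabs_triang. rewrite Rabs_Ropp, Rabs_mult.
    assert (Hq : r ^ 2 <= Rabs r / 2) by (rewrite Hr2; generalize (Rabs_pos r); nra).
    assert (2 * r ^ 2 * (Rabs c + Rabs x) <= Rabs r * (Rabs c + Rabs x)).
    { generalize (Rabs_pos x) (Rabs_pos c). nra. }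
    generalize (Rabs_pos r) (Rabs_pos x) (Rabs_pos c). nra. }
  assert (Ht := Ph_taylor u c). fold d in Ht.
  replace (Ph u - Ph c + r * x * phi c) with ((Ph u - Ph c - phi c * d) + phi c * (d + r * x)) by ring.
  eapply Rle_trans. apply Rabs_triang. rewrite Rabs_mult, (Rabs_pos_eq (phi c)) by (left; apply phi_pos).
  assert (d ^ 2 <= 4 * r ^ 2 * (Rabs c + Rabs x) ^ 2).
  { replace (d ^ 2) with (Rabs d * Rabs d) by (rewrite <- sq_abs; ring).
    apply Rle_trans with ((2*Rabs r*(Rabs c+Rabs x))*(2*Rabs r*(Rabs c+Rabs x))).
    apply Rmult_le_compat; auto using Rabs_pos.
    rewrite Hr2; right; ring. }
  generalize (phi_le1 c) (phi_pos c) (Rabs_pos (d + r * x)) (Rabs_pos x) (Rabs_pos c). nra.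
Qed.

Definition Gr (r : R) (a b : Rbar) (x : R) := phi x * (Qr r x b - Qr r x a).
Definition err (r x : R) (c : Rbar) := Qr r x c - Qe c + r * x * phiE c.
Definition cbound (B : R) (c : Rbar) := match c with Finite c => Rabs c <= B | _ => True end.

Lemma err_bound r x c B : Rabs r <= 1 / 2 -> cbound B c -> 0 <= B ->
  Rabs (err r x c) <= 4 * r ^ 2 * (1 + B + Rabs x) ^ 2.
Proof.
  intros Hr Hc HB. destruct c as [c| |]; unfold err; simpl in *.
  - eapply Rle_trans. apply Qtaylor; auto.
    apply Rmult_le_compat_l. nra. generalize (Rabs_pos c) (Rabs_pos x); nra.
  - replace (1 - 1 + r * x * 0) with 0 by ring. rewrite Rabs_R0. apply Rmult_le_pos. nra. generalize (Rabs_pos x); nra.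
  - replace (0 - 0 + r * x * 0) with 0 by ring. rewrite Rabs_R0. apply Rmult_le_pos. nra. generalize (Rabs_pos x); nra.
Qed.

Lemma Qr_cont r c (x : R) : -1 < r < 1 -> continuous (fun x => Qr r x c) x.
Proof.
  intro Hr. assert (Hs := sr_pos r Hr). destruct c as [c| |]; simpl.
  - apply (continuous_comp (fun x => (c - r * x) / sr r) Ph).
    apply (ex_derive_continuous (K:=R_AbsRing) (V:=R_NormedModule)). auto_derive. lra.
    apply Ph_cont.
  - apply continuous_const.
  - apply continuous_const.
Qed.

Lemma Gr_cont r a b (x : R) : -1 < r < 1 -> continuous (Gr r a b) x.
Proof.
  intro Hr. unfold Gr. apply (continuous_mult phi (fun x => Qr r x b - Qr r x a)).
  apply phi_cont. apply (continuous_minus (fun x => Qr r x b) (fun x => Qr r x a)); apply Qr_cont; auto.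
Qed.

Lemma Qr_01 r x c : 0 <= Qr r x c <= 1.
Proof. destruct c; simpl; try lra. apply Ph_01. Qed.

Lemma Gr_dom r a b x : Rabs (Gr r a b x) <= 16 / (1 + x ^ 2).
Proof.
  unfold Gr. rewrite Rabs_mult. eapply Rle_trans. 2: apply phi_dom.
  rewrite <- (Rmult_1_r (Rabs (phi x))) at 2. apply Rmult_le_compat_l. apply Rabs_pos.
  generalize (Qr_01 r x b) (Qr_01 r x a). intros. unfold Rabs; destruct Rcase_abs; lra.
Qed.

Lemma Gr_err r a b x :
  Gr r a b x - phi x * (Qe b - Qe a) - r * (x * phi x * (phiE a - phiE b))
  = phi x * (err r x b - err r x a).
Proof. unfold Gr, err. ring. Qed.

Lemma Gr_err_bound r a b x B : Rabs r <= 1 / 2 -> cbound B a -> cbound B b -> 0 <= B ->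
  Rabs (phi x * (err r x b - err r x a)) <= r ^ 2 * (16 * (16 * (1 + B) ^ 2) / (1 + x ^ 2)).
Proof.
  intros Hr Ha Hb HB.
  assert (Hx2 : (1 + B + Rabs x) ^ 2 <= 2 * (1 + B) ^ 2 * (1 + x ^ 2)).
  { rewrite (sq_abs x). generalize (Rabs_pos x). generalize (Rabs x). intros ax Hax.
    assert (H1 : 1 + B + ax <= (1 + B) * (1 + ax)) by nra.
    assert (H2 : (1 + B + ax) ^ 2 <= ((1 + B) * (1 + ax)) ^ 2) by (apply pow_incr; lra).
    assert (H3 : (1 + ax) ^ 2 <= 2 * (1 + ax * ax)) by (generalize (pow2_ge_0 (1 - ax)); nra).
    assert (0 <= (1 + B) ^ 2) by nra.
    replace (((1 + B) * (1 + ax)) ^ 2) with ((1 + B) ^ 2 * (1 + ax) ^ 2) in H2 by ring.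
    nra. }
  assert (He : Rabs (err r x b - err r x a) <= 8 * r ^ 2 * (1 + B + Rabs x) ^ 2).
  { unfold Rminus. eapply Rle_trans. apply Rabs_triang. rewrite Rabs_Ropp.
    generalize (err_bound r x b B Hr Hb HB) (err_bound r x a B Hr Ha HB). lra. }
  replace (r ^ 2 * (16 * (16 * (1 + B) ^ 2) / (1 + x ^ 2))) with (16 * (16 * r ^ 2 * (1 + B) ^ 2) / (1 + x ^ 2)) by (field; nra).
  apply (dom_of (fun x => phi x * (err r x b - err r x a))). nra.
  rewrite Rabs_mult, (Rabs_pos_eq (phi x)) by (left; apply phi_pos).
  assert (Hp := phi_le_exp x). assert (Hpp := phi_pos x).
  apply Rle_trans with (phi x * (16 * r ^ 2 * (1 + B) ^ 2 * (1 + x ^ 2))).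
  - apply Rmult_le_compat_l. lra. nra.
  - assert (0 <= 16 * r ^ 2 * (1 + B) ^ 2 * (1 + x ^ 2)) by (apply Rmult_le_pos; nra).
    rewrite Rmult_comm. apply Rmult_le_compat_l; auto.
Qed.

Lemma gen_ext (f g : R -> R) (lo hi : Rbar) l l' : (forall x, f x = g x) -> l = l' ->
  is_RInt_gen f (Rbar_locally lo) (Rbar_locally hi) l -> is_RInt_gen g (Rbar_locally lo) (Rbar_locally hi) l'.
Proof. intros H1 H2 H. replace g with f by (apply functional_extensionality; auto). subst; auto. Qed.

Lemma gen_scal (f : R -> R) (lo hi : Rbar) k l :
  is_RInt_gen f (Rbar_locally lo) (Rbar_locally hi) l ->
  is_RInt_gen (fun x => k * f x) (Rbar_locally lo) (Rbar_locally hi) (k * l).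
Proof. intro H. apply (is_RInt_gen_scal (Fa := Rbar_locally lo) (Fb := Rbar_locally hi) f k l H). Qed.

Lemma gen_minus (f g : R -> R) (lo hi : Rbar) lf lg :
  is_RInt_gen f (Rbar_locally lo) (Rbar_locally hi) lf ->
  is_RInt_gen g (Rbar_locally lo) (Rbar_locally hi) lg ->
  is_RInt_gen (fun x => f x - g x) (Rbar_locally lo) (Rbar_locally hi) (lf - lg).
Proof. intros H1 H2. apply (is_RInt_gen_minus (Fa := Rbar_locally lo) (Fb := Rbar_locally hi) f g lf lg H1 H2). Qed.

Lemma loc_lt (lo : Rbar) m : Rbar_lt lo (Finite m) -> Rbar_locally lo (fun x => x < m).
Proof.
  destruct lo as [l| |]; simpl; intro H; try tauto.
  - assert (Hp : 0 < m - l) by lra. exists (mkposreal _ Hp). intros y Hy.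
    unfold ball in Hy; simpl in Hy; unfold AbsRing_ball, abs, minus, plus, opp in Hy; simpl in Hy.
    unfold Rabs in Hy; destruct Rcase_abs in Hy; lra.
  - exists m. auto.
Qed.

Lemma loc_gt (hi : Rbar) m : Rbar_lt (Finite m) hi -> Rbar_locally hi (fun x => m < x).
Proof.
  destruct hi as [l| |]; simpl; intro H; try tauto.
  - assert (Hp : 0 < l - m) by lra. exists (mkposreal _ Hp). intros y Hy.
    unfold ball in Hy; simpl in Hy; unfold AbsRing_ball, abs, minus, plus, opp in Hy; simpl in Hy.
    unfold Rabs in Hy; destruct Rcase_abs in Hy; lra.
  - exists m. auto.
Qed.

Lemma filt_le (lo hi : Rbar) m : Rbar_lt lo (Finite m) -> Rbar_lt (Finite m) hi ->
  filter_prod (Rbar_locally lo) (Rbar_locally hi) (fun ab : R * R => fst ab <= snd ab).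
Proof.
  intros H1 H2. exists (fun x => x < m) (fun x => m < x).
  apply loc_lt; auto. apply loc_gt; auto. intros x y Hx Hy; simpl; lra.
Qed.

Lemma key_bound a b (lo hi : Rbar) B m : cbound B a -> cbound B b -> 0 <= B ->
  Rbar_lt lo (Finite m) -> Rbar_lt (Finite m) hi ->
  exists J, forall r, Rabs r <= 1 / 2 ->
    Rabs (RInt_gen (Gr r a b) (Rbar_locally lo) (Rbar_locally hi)
          - (Qe b - Qe a) * (Qe hi - Qe lo) - r * ((phiE a - phiE b) * (phiE lo - phiE hi))) <= r ^ 2 * J.
Proof.
  intros Ha Hb HB H1 H2.
  set (K := 16 * (16 * (1 + B) ^ 2)).
  assert (HK : 0 <= K) by (unfold K; nra).
  destruct (dom_ex (fun x => K / (1 + x ^ 2)) K lo hi) as [J HJ].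
  { intro x. apply (ex_derive_continuous (K:=R_AbsRing) (V:=R_NormedModule)). auto_derive. nra. }
  { intro x. rewrite Rabs_pos_eq. lra. apply Rdiv_le_0_compat; nra. }
  exists J. intros r Hr.
  assert (Hr1 : -1 < r < 1) by (unfold Rabs in Hr; destruct Rcase_abs in Hr; lra).
  destruct (dom_ex (Gr r a b) 16 lo hi) as [V HV].
  { intro; apply Gr_cont; auto. } { intro; apply Gr_dom. }
  rewrite (gen_unique _ _ _ _ HV).
  assert (HP : is_RInt_gen (fun x => (Qe b - Qe a) * phi x) (Rbar_locally lo) (Rbar_locally hi)
              ((Qe b - Qe a) * (Qe hi - Qe lo))) by (apply gen_scal, phi_gen).
  assert (HD : is_RInt_gen (fun x => (r * (phiE a - phiE b)) * (x * phi x)) (Rbar_locally lo) (Rbar_locally hi)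
              ((r * (phiE a - phiE b)) * (phiE lo - phiE hi))) by (apply gen_scal, xphi_gen).
  assert (HE := gen_minus _ _ _ _ _ _ (gen_minus _ _ _ _ _ _ HV HP) HD).
  assert (HE' : is_RInt_gen (fun x => phi x * (err r x b - err r x a)) (Rbar_locally lo) (Rbar_locally hi)
     (V - (Qe b - Qe a) * (Qe hi - Qe lo) - r * ((phiE a - phiE b) * (phiE lo - phiE hi)))).
  { eapply gen_ext. 3: exact HE.
    - intro x. cbv beta. rewrite <- Gr_err.
      assert (E : Gr r a b x - (Qe b - Qe a) * phi x - r * (phiE a - phiE b) * (x * phi x) = Gr r a b x - phi x * (Qe b - Qe a) - r * (x * phi x * (phiE a - phiE b))) by ring.
      exact E.
    - assert (E : V - (Qe b - Qe a) * (Qe hi - Qe lo) - r * (phiE a - phiE b) * (phiE lo - phiE hi) = V - (Qe b - Qe a) * (Qe hi - Qe lo) - r * ((phiE a - phiE b) * (phiE lo - phiE hi))) by ring.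
      exact E. }
  assert (HM := gen_scal _ _ _ (r ^ 2) _ HJ).
  refine (RInt_gen_norm (V := R_CompleteNormedModule) (Fa := Rbar_locally lo) (Fb := Rbar_locally hi) _ _ _ _ _ _ HE' HM).
  - apply (filt_le lo hi m); auto.
  - exists (fun _ => True) (fun _ => True); try apply filter_true.
    intros x y _ _ z _. apply Gr_err_bound; auto.
Qed.

Lemma deriv_from_bound (f : R -> R) P0 D J :
  (forall r, Rabs r <= 1 / 2 -> Rabs (f r - P0 - r * D) <= r ^ 2 * J) ->
  is_derive f 0 D /\ f 0 = P0.
Proof.
  intro HJ.
  assert (Hf0 : f 0 = P0).
  { assert (H := HJ 0 ltac:(rewrite Rabs_R0; lra)).
    replace (0 ^ 2 * J) with 0 in H by ring.
    replace (f 0 - P0 - 0 * D) with (f 0 - P0) in H by ring.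
    generalize (Rabs_pos (f 0 - P0)). intro. assert (Rabs (f 0 - P0) = 0) by lra.
    apply Rabs_eq_0 in H1. lra. }
  split; [| exact Hf0].
  apply is_derive_Reals. intros eps Heps.
  assert (HJ1 : 0 < Rabs J + 1) by (generalize (Rabs_pos J); lra).
  assert (Hd : 0 < Rmin (1 / 2) (eps / (Rabs J + 1))).
  { apply Rmin_pos. lra. apply Rdiv_lt_0_compat; lra. }
  exists (mkposreal _ Hd). intros h Hh Hhd. simpl in Hhd.
  assert (Hh1 : Rabs h <= 1 / 2) by (generalize (Rmin_l (1/2) (eps / (Rabs J + 1))); lra).
  assert (Hh2 : Rabs h < eps / (Rabs J + 1)) by (generalize (Rmin_r (1/2) (eps / (Rabs J + 1))); lra).
  assert (H := HJ h Hh1).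
  rewrite Rplus_0_l, Hf0.
  assert (Hpos : 0 < Rabs h) by (apply Rabs_pos_lt; auto).
  replace ((f h - P0) / h - D) with ((f h - P0 - h * D) / h) by (field; auto).
  unfold Rdiv. rewrite Rabs_mult, Rabs_inv.
  apply Rmult_lt_reg_r with (Rabs h); auto. rewrite Rmult_assoc, Rinv_l by lra. rewrite Rmult_1_r.
  eapply Rle_lt_trans. apply H. rewrite sq_abs.
  assert (J <= Rabs J) by apply Rle_abs.
  assert (Rabs h * (Rabs J + 1) < eps).
  { apply Rmult_lt_reg_r with (/ (Rabs J + 1)). apply Rinv_0_lt_compat; lra.
    replace (Rabs h * (Rabs J + 1) * / (Rabs J + 1)) with (Rabs h) by (field; lra). exact Hh2. }
  assert (Rabs h * Rabs h * J <= Rabs h * Rabs h * Rabs J).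
  { apply Rmult_le_compat_l; auto. apply Rmult_le_pos; apply Rabs_pos. }
  assert (Rabs h * Rabs h * Rabs J < eps * Rabs h).
  { replace (eps * Rabs h) with (Rabs h * eps) by ring.
    replace (Rabs h * Rabs h * Rabs J) with (Rabs h * (Rabs h * Rabs J)) by ring.
    apply Rmult_lt_compat_l; auto. lra. }
  lra.
Qed.

Lemma cell_deriv a b (lo hi : Rbar) B m : cbound B a -> cbound B b -> 0 <= B ->
  Rbar_lt lo (Finite m) -> Rbar_lt (Finite m) hi ->
  is_derive (fun r => RInt_gen (Gr r a b) (Rbar_locally lo) (Rbar_locally hi)) 0
     ((phiE a - phiE b) * (phiE lo - phiE hi)) /\
  RInt_gen (Gr 0 a b) (Rbar_locally lo) (Rbar_locally hi) = (Qe b - Qe a) * (Qe hi - Qe lo).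
Proof.
  intros Ha Hb HB H1 H2. destruct (key_bound a b lo hi B m Ha Hb HB H1 H2) as [J HJ].
  exact (deriv_from_bound (fun r => RInt_gen (Gr r a b) (Rbar_locally lo) (Rbar_locally hi)) _ _ J HJ).
Qed.

Lemma Pcell_eq w r i j : -1 < r < 1 ->
  Pcell w r i j = RInt_gen (Gr r (code_lo w j) (code_hi w j)) (Rbar_locally (code_lo w i)) (Rbar_locally (code_hi w i)).
Proof.
  intro Hr. unfold Pcell. f_equal. apply functional_extensionality. intro x.
  apply gen_unique. apply inner; auto.
Qed.

Definition pp w i := Qe (code_hi w i) - Qe (code_lo w i).
Definition dd w i := phiE (code_lo w i) - phiE (code_hi w i).

Lemma cell_mid w i : 0 < w -> (i <= 3)%nat -> exists m, Rbar_lt (code_lo w i) (Finite m) /\ Rbar_lt (Finite m) (code_hi w i).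
Proof.
  intros Hw Hi. destruct i as [|[|[|[|i]]]]; simpl.
  - exists (- w - 1). simpl; split; auto; lra.
  - exists (- w / 2). simpl; lra.
  - exists (w / 2). simpl; lra.
  - exists (w + 1). simpl; split; auto; lra.
  - lia.
Qed.

Lemma cell_cb w i : 0 < w -> cbound w (code_lo w i) /\ cbound w (code_hi w i).
Proof.
  intros Hw. destruct i as [|[|[|[|i]]]]; simpl; split; auto;
   try (rewrite Rabs_Ropp); try (rewrite Rabs_R0); try (rewrite Rabs_pos_eq); lra.
Qed.

Lemma cell_facts w i j : 0 < w -> (i <= 3)%nat -> (j <= 3)%nat ->
  Derive (fun r => Pcell w r i j) 0 = dd w j * dd w i /\ Pcell w 0 i j = pp w j * pp w i.
Proof.
  intros Hw Hi Hj. destruct (cell_mid w i Hw Hi) as [m [H1 H2]].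
  destruct (cell_cb w j Hw) as [Ha Hb].
  destruct (cell_deriv (code_lo w j) (code_hi w j) (code_lo w i) (code_hi w i) w m Ha Hb ltac:(lra) H1 H2) as [Hd H0].
  split.
  - apply is_derive_unique. eapply is_derive_ext_loc. 2: exact Hd.
    assert (Hp : 0 < 1 / 2) by lra. exists (mkposreal _ Hp). intros t Ht.
    unfold ball in Ht; simpl in Ht; unfold AbsRing_ball, abs, minus, plus, opp in Ht; simpl in Ht.
    symmetry. apply Pcell_eq. unfold Rabs in Ht; destruct Rcase_abs in Ht; lra.
  - rewrite Pcell_eq by lra. rewrite H0. reflexivity.
Qed.

Lemma Ph0 : Ph 0 = 1 / 2.
Proof. unfold Ph, Ef. rewrite RInt_point. unfold zero; simpl. ring. Qed.

Lemma Ph_neg x : Ph (- x) = 1 - Ph x.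
Proof. unfold Ph. rewrite Ef_odd. field. Qed.

Lemma Ef_incr a b : a < b -> Ef a < Ef b.
Proof.
  intro Hab. destruct (MVT_gen Ef a b phi) as [c [_ Hc]].
  - intros; apply Ef_derive.
  - intros. apply continuity_pt_filterlim. apply (ex_derive_continuous (K:=R_AbsRing) (V:=R_NormedModule)). eexists; apply Ef_derive.
  - generalize (phi_pos c). nra.
Qed.

Lemma Ph_range w : 0 < w -> 1 / 2 < Ph w < 1.
Proof.
  intro Hw. unfold Ph. split.
  - assert (Ef 0 = 0) by (unfold Ef; rewrite RInt_point; reflexivity).
    generalize (Ef_incr 0 w Hw). lra.
  - generalize (Ef_incr w (w + 1) ltac:(lra)) (Ef_bound (w + 1)). intros. unfold Rabs in H0; destruct Rcase_abs in H0; lra.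
Qed.

Lemma sum_sq (p0 p1 p2 p3 d0 d1 d2 d3 : R) : p0 <> 0 -> p1 <> 0 -> p2 <> 0 -> p3 <> 0 ->
  let t := fun (di dj pi pj : R) => (dj * di) ^ 2 / (pj * pi) in
  (t d0 d0 p0 p0 + t d0 d1 p0 p1 + t d0 d2 p0 p2 + t d0 d3 p0 p3) +
  (t d1 d0 p1 p0 + t d1 d1 p1 p1 + t d1 d2 p1 p2 + t d1 d3 p1 p3) +
  (t d2 d0 p2 p0 + t d2 d1 p2 p1 + t d2 d2 p2 p2 + t d2 d3 p2 p3) +
  (t d3 d0 p3 p0 + t d3 d1 p3 p1 + t d3 d2 p3 p2 + t d3 d3 p3 p3)
  = (d0 ^ 2 / p0 + d1 ^ 2 / p1 + d2 ^ 2 / p2 + d3 ^ 2 / p3) ^ 2.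
Proof. intros. unfold t. field. repeat split; auto. Qed.

Theorem theorem2 (w : R) (k : nat) (hw : 0 < w) (hk : (0 < k)%nat) :
  Rratio k w 0 = (g w) ^ 2.
Proof.
  unfold Rratio, I2.
  assert (HF : forall i j, (i <= 3)%nat -> (j <= 3)%nat ->
     (Derive (fun r => Pcell w r i j) 0) ^ 2 / Pcell w 0 i j = (dd w j * dd w i) ^ 2 / (pp w j * pp w i)).
  { intros i j Hi Hj. destruct (cell_facts w i j hw Hi Hj) as [E1 E2]. rewrite E1, E2. reflexivity. }
  cbn [sum_f_R0].
  rewrite !HF by lia.
  destruct (Ph_range w hw) as [Hp1 Hp2].
  assert (Hq : forall i, (i <= 3)%nat -> pp w i <> 0).
  { intros i Hi. unfold pp. destruct i as [|[|[|[|i]]]]; simpl; try lia;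
      rewrite ?Ph_neg, ?Ph0; lra. }
  rewrite (sum_sq (pp w 0) (pp w 1) (pp w 2) (pp w 3) (dd w 0) (dd w 1) (dd w 2) (dd w 3)) by (apply Hq; lia).
  unfold pp, dd; cbn [code_lo code_hi Qe phiE]. rewrite !Ph_neg, !Ph0, !phi_even.
  unfold g, I1. rewrite Phi_Ph, asin_0.

  set (c0 := / sqrt (2 * PI)).
  set (E := exp (- w ^ 2 / 2)).
  assert (Hc : c0 * c0 = / (2 * PI)).
  { unfold c0. rewrite <- Rinv_mult. rewrite sqrt_sqrt. reflexivity. generalize PI_RGT_0; lra. }
  assert (Hphiw : phi w = c0 * E) by reflexivity.
  assert (Hphi0 : phi 0 = c0).
  { unfold phi. replace (- 0 ^ 2 / 2) with 0 by field. rewrite exp_0. fold c0. ring. }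
  assert (HE2 : exp (- w ^ 2) = E ^ 2).
  { unfold E. replace (exp (- w ^ 2 / 2) ^ 2) with (exp (- w ^ 2 / 2) * exp (- w ^ 2 / 2)) by ring.
    rewrite <- exp_plus. f_equal. field. }
  rewrite HE2, Hphiw, Hphi0.
  assert (HPI := PI_RGT_0).
  assert (Hk : 0 < INR k) by (apply lt_0_INR; lia).
  replace ((c0 * E - 0) ^ 2) with (c0 * c0 * E ^ 2) by ring.
  replace (0 - c0 * E) with (- (c0 * E)) by ring.
  replace ((- (c0 * E)) ^ 2) with (c0 * c0 * E ^ 2) by ring.
  replace ((c0 * E - c0) ^ 2) with (c0 * c0 * (1 - E) ^ 2) by ring.
  replace ((c0 - c0 * E) ^ 2) with (c0 * c0 * (1 - E) ^ 2) by ring.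
  rewrite !Hc.
  clearbody c0 E. field. repeat split; intro; lra.
Qed.
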